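(* Let $\mathcal{E}=[\theta,u]$ be an interval effect algebra that generates its ordered linear space, has an order-determining set of states, and is unrestricted. An effect $a\in\mathcal{E}$ is repeatable if and only if $a=\theta$ or there exists $s\in\mathcal{S}(\mathcal{E})$ with $s(a)=1$.
   Context: Let $V$ be a real vector space with zero $\theta$ and $K\subseteq V$ a positive cone ($\mathbb{R}^+K\subseteq K$, $K+K\subseteq K$, $K\cap(-K)=\{\theta\}$), ordered by $x\le y$ iff $y-x\in K$. For $u\in K$, $u\ne\theta$, $\mathcal{E}=[\theta,u]=\{x\in K:x\le u\}$; for $a,b\in\mathcal{E}$, $a\perp b$ means $a+b\le u$. $\mathcal{E}$ generates $V$ means $K=\mathbb{R}^+\mathcal{E}$ and $V=K-K$. A state is $s\colon\mathcal{E}\to[0,1]$ with $s(u)=1$ and $s(a+b)=s(a)+s(b)$ whenever $a\perp b$; $\mathcal{S}(\mathcal{E})$ is the set of all states, assumed order-determining: $a\le b$ iff $s(a)\le s(b)$ for all $s$. Affine = preserves finite convex combinations. Unrestricted: every affine $f\colon\mathcal{S}(\mathcal{E})\to[0,1]$ is of the form $f(s)=s(c)$ for some $c\in\mathcal{E}$. A substate is $\lambda s$, $\lambda\in[0,1]$, $s\in\mathcal{S}(\mathcal{E})$. An operation on $\mathcal{E}$ is an affine map $\mathcal{I}$ from $\mathcal{S}(\mathcal{E})$ to substates on $\mathcal{E}$; its dual $\mathcal{I}^*\colon\mathcal{E}\to\mathcal{E}$ is the unique affine map with $s[\mathcal{I}^*(b)]=\mathcal{I}(s)(b)$ for all $s,b$.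 An effect $a$ is $\mathcal{I}$-repeatable if $\mathcal{I}^*(u)=a$ and $\mathcal{I}^*(a)=a$; $a$ is repeatable if it is $\mathcal{I}$-repeatable for some operation $\mathcal{I}$ on $\mathcal{E}$. *)

(* Defs.v *)
From HB Require Import structures.
From mathcomp Require Import all_boot all_order all_algebra.
From mathcomp Require Import reals.
Set Implicit Arguments. Unset Strict Implicit. Unset Printing Implicit Defensive.
Import Order.TTheory GRing.Theory Num.Theory.
Local Open Scope ring_scope.

Section EffectAlgebra.
Variables (R : realType) (V : lmodType R) (K : V -> Prop) (u : V).

Definition positive_cone : Prop :=
  (forall (r : R) x, 0 <= r -> K x -> K (r *: x)) /\
  (forall x y, K x -> K y -> K (x + y)) /\
  (forall x, K x -> K (- x) -> x = 0).

Definition cle (x y : V) : Prop := K (y - x).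

Definition Eff (x : V) : Prop := K x /\ cle x u.

Definition orth (a b : V) : Prop := cle (a + b) u.

Definition generates : Prop :=
  (forall x, K x <-> exists (r : R) e, 0 <= r /\ Eff e /\ x = r *: e) /\
  (forall v, exists x y, K x /\ K y /\ v = x - y).

(* States.  A state is represented as a function V -> R that vanishes
   outside E (so that the representation of a state is unique). *)
Definition is_state (s : V -> R) : Prop :=
  (forall x, ~ Eff x -> s x = 0) /\
  (forall x, Eff x -> 0 <= s x <= 1) /\
  s u = 1 /\
  (forall a b, Eff a -> Eff b -> orth a b -> s (a + b) = s a + s b).

Definition order_determining : Prop :=
  forall a b, Eff a -> Eff b -> (cle a b <-> forall s, is_state s -> s a <= s b).

Definition ccomb (l : R) (s t : V -> R) : V -> R :=
  fun x => l * s x + (1 - l) * t x.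

Definition affine_fun (f : (V -> R) -> R) : Prop :=
  forall (l : R) s t, 0 <= l <= 1 -> is_state s -> is_state t ->
    f (ccomb l s t) = l * f s + (1 - l) * f t.

Definition unrestricted : Prop :=
  forall f : (V -> R) -> R, affine_fun f ->
    (forall s, is_state s -> 0 <= f s <= 1) ->
    exists c, Eff c /\ forall s, is_state s -> f s = s c.

Definition is_substate (t : V -> R) : Prop :=
  exists (l : R) s, 0 <= l <= 1 /\ is_state s /\ t = (fun x => l * s x).

Definition operation (I : (V -> R) -> (V -> R)) : Prop :=
  (forall s, is_state s -> is_substate (I s)) /\
  (forall (l : R) s t, 0 <= l <= 1 -> is_state s -> is_state t ->
     I (ccomb l s t) = ccomb l (I s) (I t)).

Definition dual_of (I : (V -> R) -> (V -> R)) (Istar : V -> V) : Prop :=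
  (forall b, Eff b -> Eff (Istar b)) /\
  (forall s b, is_state s -> Eff b -> s (Istar b) = I s b).

Definition repeatable_for (I : (V -> R) -> (V -> R)) (a : V) : Prop :=
  exists Istar, dual_of I Istar /\ Istar u = a /\ Istar a = a.

Definition repeatable (a : V) : Prop :=
  exists I, operation I /\ repeatable_for I a.

End EffectAlgebra.

(* Main.v *)
Require Import Defs.
From HB Require Import structures.
From mathcomp Require Import all_boot all_order all_algebra.
From mathcomp Require Import reals.
From mathcomp Require Import ring lra.
From Stdlib Require Import ClassicalEpsilon FunctionalExtensionality.
Import Order.TTheory GRing.Theory Num.Theory.
Local Open Scope ring_scope.

Set Implicit Arguments.
Section Aux.
Variables (R : realType) (V : lmodType R) (K : V -> Prop) (u : V).
Hypothesis hK : positive_cone K.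
Hypothesis huK : K u.

Lemma K0 : K 0.
Proof. have [h _] := hK. by rewrite -(scale0r u); apply: h. Qed.

Lemma Eff0 : Eff K u 0.
Proof. split; first exact: K0. by rewrite /cle subr0. Qed.

Lemma state0 s : is_state K u s -> s 0 = 0.
Proof.
case=> _ [_ [_ hadd]].
have := hadd 0 0 Eff0 Eff0.
rewrite /orth /cle addr0 subr0 => /(_ huK) h.
by move: h; lra.
Qed.

Lemma antisym x y : cle K x y -> cle K y x -> x = y.
Proof.
rewrite /cle => h1 h2. have [_ [_ h]] := hK.
apply/eqP; rewrite eq_sym -subr_eq0; apply/eqP; apply: h => //.
by rewrite opprB.
Qed.
End Aux.
Arguments K0 {R V K u}. Arguments Eff0 {R V K u}. Arguments state0 {R V K u}.

Theorem corollary3p4 (R : realType) (V : lmodType R) (K : V -> Prop) (u : V)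
  (hK : positive_cone K) (huK : K u) (hu0 : u <> 0)
  (hgen : generates K u) (hod : order_determining K u)
  (hunr : unrestricted K u) (a : V) (ha : Eff K u a) :
  repeatable K u a <-> (a = 0 \/ exists s, is_state K u s /\ s a = 1).
Proof.
have E0 := Eff0 hK huK.
have Eu : Eff K u u by split; [exact: huK | rewrite /cle subrr; exact: K0 hK huK].
have exs : exists s, is_state K u s.
  apply: NNPP => hn.
  have : cle K u 0.
    apply/(hod u 0 Eu E0) => s hs; exfalso; apply: hn; by exists s.
  rewrite /cle sub0r => hm.
  have [_ [_ h]] := hK. by apply: hu0; apply: h.
split.
- case=> I [[hsub _] [Is [[hIE hIs] [Iu Ia]]]].
  case: (classic (exists s, is_state K u s /\ 0 < s a)) => [[s [hs hpos]]|hn].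
    right. have [l [s' [hl [hs' eI]]]] := hsub s hs.
    have e1 : s a = l.
      by rewrite -{1}Iu hIs // eI; have [_ [_ [-> _]]] := hs'; rewrite mulr1.
    have e2 : s a = l * s' a by rewrite -{1}Ia hIs // eI.
    exists s'; split => //.
    have lp : l != 0 by rewrite -e1 gt_eqF.
    by apply: (mulfI lp); rewrite -e2 e1 mulr1.
  left. apply: (antisym hK); last by rewrite /cle subr0; case: ha.
  apply/(hod a 0 ha E0) => s hs.
  rewrite (state0 hK huK s hs).
  case: (hs) => _ [/(_ a ha) /andP [h0 _] _].
  rewrite leNgt; apply/negP => hp; apply: hn; by exists s.
- case=> [-> | [s [hs hsa]]].
  + have [s0 hs0] := exs.
    exists (fun _ => fun _ => 0); split.
      split.
        move=> t _; exists 0, s0; split; first by rewrite lexx ler01.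
        split => //; apply: functional_extensionality => x; by rewrite mul0r.
      move=> l t1 t2 _ _ _; rewrite /ccomb.
      apply: functional_extensionality => x; by rewrite !mulr0 addr0.
    exists (fun _ => 0); split; last by [].
    split => // t b ht _; exact: state0 hK huK t ht.
  + pose P b c := Eff K u c /\ forall t, is_state K u t -> t a * s b = t c.
    have exP b : exists c, P b c.
      apply: (hunr (fun t => t a * s b)).
        move=> l t1 t2 _ _ _; rewrite /ccomb; ring.
      move=> t ht.
      have [_ [/(_ a ha) /andP [ta0 ta1] _]] := ht.
      have [sb0 sb1] : 0 <= s b /\ s b <= 1.
        case: (classic (Eff K u b)) => hb.
          by have [_ [/(_ b hb) /andP [? ?] _]] := hs.
        by rewrite (hs.1 b hb) lexx ler01.
      apply/andP; split; first exact: mulr_ge0.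
      by rewrite -(mulr1 1) ler_pM.
    pose Is b := epsilon (inhabits 0) (P b).
    have HP b : P b (Is b) := epsilon_spec (inhabits 0) (P b) (exP b).
    have eqa b : s b = 1 -> Is b = a.
      move=> h; have [hE ht] := HP b.
      apply: (antisym hK).
        by apply/(hod _ _ hE ha) => t htt; rewrite -ht // h mulr1.
      by apply/(hod _ _ ha hE) => t htt; rewrite -ht // h mulr1.
    exists (fun t => fun x => t a * s x); split.
      split.
        move=> t ht; exists (t a), s; split => //.
        by have [_ [/(_ a ha) ? _]] := ht.
      move=> l t1 t2 _ _ _; rewrite /ccomb.
      apply: functional_extensionality => x; ring.
    exists Is; split; first split.
    * by move=> b _; case: (HP b).
    * by move=> t b ht _; case: (HP b) => _ <-.
    * by split; apply: eqa => //; have [_ [_ [-> _]]] := hs.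
Qed.
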